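(* Let $D,W,N_0,\zeta,P_A,h,g>0$ and $\gamma=\frac{g\zeta P_A h}{WN_0}$. Consider the problem: minimize $\tau_0+\tau_S$ over $\tau_0,\tau_S,P\ge 0$ subject to $P\tau_S\le \zeta P_A h\tau_0$ and $\tau_S W\log_2\left(1+\frac{Pg}{WN_0}\right)\ge D$. Its optimal solution has $$\dot\tau_S=\frac{D\ln 2}{W\alpha},\qquad \dot\tau_0=\frac{D\ln 2}{W\alpha\gamma}\left(2^{\alpha/\ln 2}-1\right),$$ where $\alpha=\mathbb{L}_0\!\left(\frac{\gamma-1}{e}\right)+1$ and $\mathbb{L}_0$ is the principal (branch $0$) Lambert W function.
   Context: Single source wireless powered network without a maximum transmit power constraint: the source harvests energy $\zeta P_A h\tau_0$ during time $\tau_0$ and then transmits $D$ bits with power $P$ during time $\tau_S$ over an AWGN channel with gain $g$, bandwidth $W$ and noise spectral density $N_0$. *)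

(* Defs.v *)
From Stdlib Require Import Reals ClassicalEpsilon.
Open Scope R_scope.

Definition log2 (x : R) : R := ln x / ln 2.

(* Principal branch (branch 0) of the Lambert W function: for y >= -1/e it is
   the unique w >= -1 with w * e^w = y (chosen by epsilon; unspecified
   outside the domain, which is never used below). *)
Definition LambertW0 (y : R) : R :=
  epsilon (inhabits 0) (fun w => -1 <= w /\ w * exp w = y).

Definition feasible (D W N0 zeta PA h g : R) (tau0 tauS P : R) : Prop :=
  0 <= tau0 /\ 0 <= tauS /\ 0 <= P /\
  P * tauS <= zeta * PA * h * tau0 /\
  tauS * W * log2 (1 + P * g / (W * N0)) >= D.

Definition optimal (D W N0 zeta PA h g : R) (tau0 tauS P : R) : Prop :=
  feasible D W N0 zeta PA h g tau0 tauS P /\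
  forall t0 tS Q, feasible D W N0 zeta PA h g t0 tS Q -> tau0 + tauS <= t0 + tS.

(* Main.v *)
Require Import Defs.
From Stdlib Require Import Reals Lra Psatz ClassicalEpsilon.
Open Scope R_scope.

Lemma ln_le_sub1 (y : R) : 0 < y -> ln y <= y - 1 /\ (ln y = y - 1 -> y = 1).
Proof.
  intro Hy. destruct (Req_dec (ln y) 0) as [H0|H0].
  - split.
    + rewrite H0. assert (exp (ln y) = y) by (apply exp_ln; lra).
      rewrite H0, exp_0 in H. lra.
    + intros _. assert (exp (ln y) = y) by (apply exp_ln; lra).
      rewrite H0, exp_0 in H. lra.
  - pose proof (exp_ineq1 _ H0) as H. rewrite exp_ln in H by lra.
    split; intros; lra.
Qed.

Lemma key (gam a x : R) : 0 < a -> exp a * (a - 1) = gam - 1 -> 0 < x ->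
  exp a * ln x <= x + gam - 1 /\ (exp a * ln x = x + gam - 1 -> x = exp a).
Proof.
  intros Ha He Hx. pose proof (exp_pos a) as Ea.
  assert (Hy : 0 < x / exp a) by (apply Rdiv_lt_0_compat; lra).
  destruct (ln_le_sub1 _ Hy) as [H1 H2].
  assert (Hl : ln (x / exp a) = ln x - a).
  { unfold Rdiv. rewrite ln_mult, ln_Rinv, ln_exp; try lra. apply Rinv_0_lt_compat; lra. }
  rewrite Hl in H1, H2.
  assert (Hq : exp a * (x / exp a) = x) by (field; lra).
  split.
  - assert (exp a * (ln x - a) <= exp a * (x / exp a - 1)) by (apply Rmult_le_compat_l; lra).
    nra.
  - intro Heq. assert (ln x - a = x / exp a - 1).
    { apply (Rmult_eq_reg_l (exp a)); [|lra]. nra. }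
    specialize (H2 H). rewrite <- Hq, H2. ring.
Qed.

Lemma lambert_spec (y : R) : -1 / exp 1 < y ->
  -1 < LambertW0 y /\ LambertW0 y * exp (LambertW0 y) = y.
Proof.
  intro Hy.
  assert (Hex : exists w, -1 <= w /\ w * exp w = y).
  { set (f := fun w => w * exp w - y).
    assert (Hc : continuity f).
    { unfold f. apply continuity_minus.
      - apply continuity_mult; apply derivable_continuous.
        + apply derivable_id.
        + apply derivable_exp.
      - apply continuity_const. intros ? ?; reflexivity. }
    set (b := Rabs y + 1).
    assert (Hb : 1 <= b) by (unfold b; pose proof (Rabs_pos y); lra).
    assert (Hf1 : f (-1) < 0).
    { unfold f. assert (Em : exp (-1) = / exp 1) by (rewrite <- exp_Ropp; f_equal; ring). rewrite Em. unfold Rdiv in Hy. lra. }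
    assert (Hfb : 0 < f b).
    { unfold f. assert (1 < exp b).
      { pose proof (exp_ineq1 b). assert (b <> 0) by lra. specialize (H H0). lra. }
      pose proof (Rle_abs y). unfold b in *. nra. }
    destruct (IVT f (-1) b Hc ltac:(lra) Hf1 Hfb) as [z [Hz1 Hz2]].
    exists z. split; [lra|]. unfold f in Hz2. lra. }
  pose proof (epsilon_spec (inhabits 0) _ Hex) as [H1 H2].
  unfold LambertW0. split; [|exact H2].
  destruct H1 as [H1|H1]; [exact H1|].
  exfalso. rewrite <- H1 in H2. assert (Em : exp (-1) = / exp 1) by (rewrite <- exp_Ropp; f_equal; ring). rewrite Em in H2. unfold Rdiv in Hy. lra.
Qed.

Theorem lemma2 (D W N0 zeta PA h g : R) :
  0 < D -> 0 < W -> 0 < N0 -> 0 < zeta -> 0 < PA -> 0 < h -> 0 < g ->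
  let gamma := g * zeta * PA * h / (W * N0) in
  let alpha := LambertW0 ((gamma - 1) / exp 1) + 1 in
  let tauS_opt := D * ln 2 / (W * alpha) in
  let tau0_opt := D * ln 2 / (W * alpha * gamma) * (Rpower 2 (alpha / ln 2) - 1) in
  (exists P, optimal D W N0 zeta PA h g tau0_opt tauS_opt P) /\
  (forall tau0 tauS P, optimal D W N0 zeta PA h g tau0 tauS P ->
     tau0 = tau0_opt /\ tauS = tauS_opt).
Proof.
  intros HD HW HN Hz HP Hh Hg gam a tS0 t00.
  assert (Hgam : 0 < gam).
  { unfold gam. apply Rdiv_lt_0_compat; [|nra].
    repeat apply Rmult_lt_0_compat; lra. }
  pose proof (exp_pos 1) as E1.
  destruct (lambert_spec ((gam - 1) / exp 1)) as [Hw1 Hw2].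
  { unfold Rdiv. apply Rmult_lt_compat_r; [apply Rinv_0_lt_compat; lra| lra]. }
  assert (Ha : 0 < a) by (unfold a; lra).
  assert (Hae : exp a * (a - 1) = gam - 1).
  { unfold a. replace (LambertW0 ((gam - 1) / exp 1) + 1 - 1) with (LambertW0 ((gam - 1) / exp 1)) by ring.
    rewrite exp_plus, Rmult_comm, <- Rmult_assoc, Hw2. field. lra. }
  clearbody a.
  assert (L2 : 0 < ln 2) by (rewrite <- ln_1; apply ln_increasing; lra).
  assert (HR : Rpower 2 (a / ln 2) = exp a) by (unfold Rpower; f_equal; field; lra).
  pose proof (exp_pos a) as Ea.
  set (K := zeta * PA * h).
  assert (HK : K = gam * (W * N0 / g)) by (unfold K, gam; field; lra).
  assert (Hc : 0 < W * N0 / g) by (apply Rdiv_lt_0_compat; nra).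
  assert (HtS : 0 < tS0) by (unfold tS0; apply Rdiv_lt_0_compat; nra).
  assert (Ht0 : t00 = tS0 * (exp a - 1) / gam) by (unfold t00, tS0; rewrite HR; field; lra).
  assert (Hea : 1 < exp a).
  { pose proof (exp_ineq1 a). assert (a <> 0) by lra. specialize (H H0). lra. }
  assert (Hsum : gam * (t00 + tS0) = D * ln 2 * exp a / W).
  { rewrite Ht0. unfold tS0.
    assert (Hg' : gam = exp a * (a - 1) + 1) by lra.
    field_simplify; try lra. rewrite Hg'. field. lra. }
  assert (LB : forall t0 tS Q, feasible D W N0 zeta PA h g t0 tS Q ->
     D * ln 2 * exp a / W <= gam * (t0 + tS) /\
     (gam * (t0 + tS) <= D * ln 2 * exp a / W -> t0 = t00 /\ tS = tS0)).
  { intros t0 tS Q [F1 [F2 [F3 [F4 F5]]]]. fold K in F4.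
    set (x := 1 + Q * g / (W * N0)) in F5.
    assert (HQ : Q * g / (W * N0) = Q / (W * N0 / g)) by (field; lra).
    assert (Hx : 1 <= x) by (unfold x; rewrite HQ; assert (0 <= Q / (W*N0/g)) by (unfold Rdiv; apply Rmult_le_pos; [lra | left; apply Rinv_0_lt_compat; lra]); lra).
    unfold log2 in F5.
    assert (Hlx : 0 < ln x).
    { destruct Hx as [Hx|Hx].
      - rewrite <- ln_1; apply ln_increasing; lra.
      - exfalso. rewrite <- Hx, ln_1 in F5. unfold Rdiv in F5. lra. }
    assert (F5' : D * ln 2 / W <= tS * ln x).
    { apply (Rmult_le_reg_r (W / ln 2)); [apply Rdiv_lt_0_compat; lra|].
      replace (D * ln 2 / W * (W / ln 2)) with D by (field; lra).
      replace (tS * ln x * (W / ln 2)) with (tS * W * (ln x / ln 2)) by (field; lra). lra. }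
    assert (HtSp : 0 < tS).
    { assert (0 < D * ln 2 / W) by (apply Rdiv_lt_0_compat; nra). nra. }
    assert (HQx : Q = (x - 1) * (W * N0 / g)) by (unfold x; field; lra).
    assert (F4' : (x - 1) * tS <= gam * t0).
    { rewrite HQx, HK in F4. apply (Rmult_le_reg_r (W * N0 / g)); [lra|]. nra. }
    destruct (key gam a x Ha Hae ltac:(lra)) as [K1 K2].
    assert (S1 : tS * (exp a * ln x) <= tS * (x + gam - 1)) by (apply Rmult_le_compat_l; lra).
    assert (S2 : exp a * (D * ln 2 / W) <= exp a * (tS * ln x)) by (apply Rmult_le_compat_l; lra).
    split.
    - replace (D * ln 2 * exp a / W) with (exp a * (D * ln 2 / W)) by (field; lra). nra.
    - intro Hle.
      replace (D * ln 2 * exp a / W) with (exp a * (D * ln 2 / W)) in Hle by (field; lra).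
      assert (E2 : exp a * (tS * ln x) = exp a * (D * ln 2 / W)) by nra.
      assert (E1x : tS * (exp a * ln x) = tS * (x + gam - 1)) by nra.
      assert (E3 : gam * t0 = (x - 1) * tS) by nra.
      assert (Hxe : x = exp a).
      { apply K2. apply (Rmult_eq_reg_l tS); lra. }
      rewrite Hxe, ln_exp in E2.
      assert (E4 : tS * a = D * ln 2 / W).
      { apply (Rmult_eq_reg_l (exp a)); lra. }
      assert (HtS' : tS = tS0).
      { unfold tS0. apply (Rmult_eq_reg_r a); [|lra]. rewrite E4. field; lra. }
      split; [|exact HtS'].
      rewrite Ht0, <- HtS'. rewrite Hxe in E3.
      apply (Rmult_eq_reg_l gam); [|lra]. rewrite E3. field. lra. }
  assert (Fopt : feasible D W N0 zeta PA h g t00 tS0 ((exp a - 1) * (W * N0 / g))).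
  { unfold feasible. fold K. rewrite Ht0. repeat split.
    - apply Rmult_le_pos; [|left; apply Rinv_0_lt_compat; lra]. nra.
    - lra.
    - nra.
    - rewrite HK. right. field. lra.
    - replace (1 + (exp a - 1) * (W * N0 / g) * g / (W * N0)) with (exp a) by (field; lra).
      unfold log2. rewrite ln_exp. unfold tS0. right. field. lra. }
  split.
  - exists ((exp a - 1) * (W * N0 / g)). split; [exact Fopt|].
    intros t0 tS Q HF. destruct (LB t0 tS Q HF) as [B _].
    apply (Rmult_le_reg_l gam); lra.
  - intros t0 tS Q [HF Hmin]. destruct (LB t0 tS Q HF) as [_ B].
    apply B. specialize (Hmin _ _ _ Fopt).
    assert (gam * (t0 + tS) <= gam * (t00 + tS0)) by (apply Rmult_le_compat_l; lra).
    lra.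
Qed.
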